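(* $$\sum_{i,j,k\ge0}\frac{q^{i^2+j^2+k^2}}{(q)_{i+j-k}(q)_{i+k-j}(q)_{j+k-i}}=\sum_{i,j\ge0}\frac{q^{i^2+j^2+(i-j)^2}}{(q)_{2i}(q)_{2j}}.$$
   Context: $q$ is complex with $|q|<1$. $(q)_n=\prod_{j=1}^n(1-q^j)$ for $n\ge0$ and $1/(q)_n:=0$ for $n<0$. *)

(* Defs.v *)
From Stdlib Require Import Reals ZArith.
Open Scope R_scope.

Record Cplx := mkC { Re : R ; Im : R }.

Definition C0 : Cplx := mkC 0 0.
Definition C1 : Cplx := mkC 1 0.
Definition Cadd (z w : Cplx) : Cplx := mkC (Re z + Re w) (Im z + Im w).
Definition Copp (z : Cplx) : Cplx := mkC (- Re z) (- Im z).
Definition Csub (z w : Cplx) : Cplx := Cadd z (Copp w).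
Definition Cmul (z w : Cplx) : Cplx :=
  mkC (Re z * Re w - Im z * Im w) (Re z * Im w + Im z * Re w).
Definition Cinv (z : Cplx) : Cplx :=
  mkC (Re z / (Re z ^ 2 + Im z ^ 2)) (- Im z / (Re z ^ 2 + Im z ^ 2)).
Definition Cdiv (z w : Cplx) : Cplx := Cmul z (Cinv w).
Definition Cnorm (z : Cplx) : R := sqrt (Re z ^ 2 + Im z ^ 2).

Fixpoint Cpow (z : Cplx) (n : nat) : Cplx :=
  match n with O => C1 | S m => Cmul (Cpow z m) z end.

(* finite sum  f 0 + ... + f n  (n+1 terms) *)
Fixpoint Csum (f : nat -> Cplx) (n : nat) : Cplx :=
  match n with O => f O | S m => Cadd (Csum f m) (f (S m)) end.

Fixpoint qpoch (q : Cplx) (n : nat) : Cplx :=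
  match n with O => C1 | S m => Cmul (qpoch q m) (Csub C1 (Cpow q (S m))) end.

(* 1/(q)_n for integer n, with 1/(q)_n := 0 for n < 0 *)
Definition invqpoch (q : Cplx) (n : Z) : Cplx :=
  if (n <? 0)%Z then C0 else Cinv (qpoch q (Z.to_nat n)).

Definition Ccv (u : nat -> Cplx) (l : Cplx) : Prop :=
  forall eps : R, eps > 0 -> exists N : nat, forall n : nat, (n >= N)%nat ->
    Cnorm (Csub (u n) l) < eps.

Definition lhs_term (q : Cplx) (i j k : nat) : Cplx :=
  Cmul (Cpow q (i*i + j*j + k*k))
   (Cmul (invqpoch q (Z.of_nat i + Z.of_nat j - Z.of_nat k))
    (Cmul (invqpoch q (Z.of_nat i + Z.of_nat k - Z.of_nat j))
          (invqpoch q (Z.of_nat j + Z.of_nat k - Z.of_nat i)))).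

Definition rhs_term (q : Cplx) (i j : nat) : Cplx :=
  Cmul (Cpow q (i*i + j*j + Z.abs_nat (Z.of_nat i - Z.of_nat j) ^ 2))
   (Cmul (invqpoch q (Z.of_nat (2*i))) (invqpoch q (Z.of_nat (2*j)))).

Definition lhs_partial (q : Cplx) (N : nat) : Cplx :=
  Csum (fun i => Csum (fun j => Csum (fun k => lhs_term q i j k) N) N) N.
Definition rhs_partial (q : Cplx) (N : nat) : Cplx :=
  Csum (fun i => Csum (fun j => rhs_term q i j) N) N.

Definition lhs_abs_partial (q : Cplx) (N : nat) : R :=
  sum_f_R0 (fun i => sum_f_R0 (fun j => sum_f_R0 (fun k => Cnorm (lhs_term q i j k)) N) N) N.
Definition rhs_abs_partial (q : Cplx) (N : nat) : R :=
  sum_f_R0 (fun i => sum_f_R0 (fun j => Cnorm (rhs_term q i j)) N) N.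

(* Main.v *)
Require Import Defs.
From Stdlib Require Import Reals ZArith.
From Stdlib Require Import Lra Lia Field.
Import Defs.
Open Scope R_scope.


Lemma Ceq : forall a b c d, a = c -> b = d -> mkC a b = mkC c d.
Proof. intros; subst; reflexivity. Qed.

Lemma Cring : ring_theory C0 C1 Cadd Cmul Csub Copp (@eq Cplx).
Proof.
  split; intros; repeat match goal with z : Cplx |- _ => destruct z end;
  unfold Csub, Cadd, Cmul, Copp, C0, C1; cbn; apply Ceq; ring.
Qed.

Lemma C1_neq_C0 : C1 <> C0.
Proof. unfold C1, C0; intro H; injection H; lra. Qed.

Lemma Cinv_l : forall p, p <> C0 -> Cmul (Cinv p) p = C1.
Proof.
  intros [a b] H; unfold Cinv, Cmul, C1; simpl.
  assert (a ^ 2 + b ^ 2 <> 0).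
  { intro E. apply H. unfold C0. assert (a = 0) by nra. assert (b = 0) by nra. subst; auto. }
  apply Ceq; field; simpl in H0; intro; apply H0; lra.
Qed.

Lemma Cfield : field_theory C0 C1 Cadd Cmul Csub Copp Cdiv Cinv (@eq Cplx).
Proof.
  split.
  - exact Cring.
  - exact C1_neq_C0.
  - reflexivity.
  - exact Cinv_l.
Qed.

Add Field Cfld : Cfield.

Lemma Cpow_add : forall z a b, Cpow z (a + b) = Cmul (Cpow z a) (Cpow z b).
Proof.
  intros z a b; induction b; simpl.
  - rewrite Nat.add_0_r; unfold C1; destruct (Cpow z a); unfold Cmul; simpl; apply Ceq; ring.
  - rewrite Nat.add_succ_r; simpl; rewrite IHb; ring.
Qed.

Lemma Cnorm_nonneg : forall z, 0 <= Cnorm z.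
Proof. intros; apply sqrt_pos. Qed.

Lemma Cnorm_mul : forall z w, Cnorm (Cmul z w) = Cnorm z * Cnorm w.
Proof.
  intros [a b] [c d]; unfold Cnorm, Cmul; simpl.
  rewrite <- sqrt_mult by nra. f_equal; ring.
Qed.

Lemma Cnorm_add : forall z w, Cnorm (Cadd z w) <= Cnorm z + Cnorm w.
Proof.
  intros [a b] [c d]; unfold Cnorm, Cadd; cbn [Re Im].
  pose proof (sqrt_cauchy a b c d) as HC. unfold Rsqr in HC.
  replace (a^2+b^2) with (a*a+b*b) by ring. replace (c^2+d^2) with (c*c+d*d) by ring.
  set (A := sqrt (a*a+b*b)) in *. set (B := sqrt (c*c+d*d)) in *.
  assert (HA : A * A = a*a+b*b) by (apply sqrt_sqrt; nra).
  assert (HB : B * B = c*c+d*d) by (apply sqrt_sqrt; nra).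
  assert (0 <= A) by apply sqrt_pos. assert (0 <= B) by apply sqrt_pos.
  rewrite <- (sqrt_square (A + B)) by lra.
  apply sqrt_le_1_alt. nra.
Qed.

Lemma Cnorm_opp : forall z, Cnorm (Copp z) = Cnorm z.
Proof. intros [a b]; unfold Cnorm, Copp; simpl; f_equal; ring. Qed.

Lemma Cnorm_sub : forall z w, Cnorm (Csub z w) <= Cnorm z + Cnorm w.
Proof. intros; unfold Csub; rewrite <- (Cnorm_opp w); apply Cnorm_add. Qed.

Lemma Cnorm_sub_ge : forall z w, Cnorm z - Cnorm w <= Cnorm (Csub z w).
Proof.
  intros z w. assert (z = Cadd (Csub z w) w) by ring.
  pose proof (Cnorm_add (Csub z w) w). rewrite <- H in H0. lra.
Qed.

Lemma Cnorm_C1 : Cnorm C1 = 1.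
Proof. unfold Cnorm, C1; simpl. replace (1*(1*1)+0*(0*1)) with 1 by ring. apply sqrt_1. Qed.

Lemma Cnorm_C0 : Cnorm C0 = 0.
Proof. unfold Cnorm, C0; simpl. replace (0*(0*1)+0*(0*1)) with 0 by ring. apply sqrt_0. Qed.

Lemma Cnorm_pow : forall z n, Cnorm (Cpow z n) = Cnorm z ^ n.
Proof. intros z n; induction n; simpl. apply Cnorm_C1. rewrite Cnorm_mul, IHn; ring. Qed.

Lemma Cnorm_zero : forall z, Cnorm z = 0 -> z = C0.
Proof.
  intros [a b] H; unfold Cnorm in H; simpl in H.
  apply sqrt_eq_0 in H; [|nra]. unfold C0; apply Ceq; nra.
Qed.

Lemma Cnorm_inv : forall z, z <> C0 -> Cnorm (Cinv z) = / Cnorm z.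
Proof.
  intros z H. assert (Cnorm z <> 0) by (intro E; apply H, Cnorm_zero, E).
  assert (Cnorm (Cinv z) * Cnorm z = 1) by (rewrite <- Cnorm_mul, Cinv_l, Cnorm_C1; auto).
  field_simplify_eq; auto.
Qed.

Lemma Cnorm_Re : forall z, Rabs (Re z) <= Cnorm z.
Proof.
  intros [a b]; unfold Cnorm; simpl. rewrite <- sqrt_Rsqr_abs. apply sqrt_le_1_alt.
  unfold Rsqr; nra.
Qed.
Lemma Cnorm_Im : forall z, Rabs (Im z) <= Cnorm z.
Proof.
  intros [a b]; unfold Cnorm; simpl. rewrite <- sqrt_Rsqr_abs. apply sqrt_le_1_alt.
  unfold Rsqr; nra.
Qed.
Lemma Cnorm_le_ReIm : forall z, Cnorm z <= Rabs (Re z) + Rabs (Im z).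
Proof.
  intros [a b]; unfold Cnorm; cbn [Re Im].
  pose proof (Rabs_pos a); pose proof (Rabs_pos b).
  assert (Ea : Rabs a * Rabs a = a * a) by (rewrite <- Rabs_mult; apply Rabs_right; nra).
  assert (Eb : Rabs b * Rabs b = b * b) by (rewrite <- Rabs_mult; apply Rabs_right; nra).
  rewrite <- (sqrt_square (Rabs a + Rabs b)) by lra.
  apply sqrt_le_1_alt. nra.
Qed.

Lemma Cnorm_Csum : forall f n, Cnorm (Csum f n) <= sum_f_R0 (fun k => Cnorm (f k)) n.
Proof.
  intros f n; induction n; simpl. lra.
  eapply Rle_trans. apply Cnorm_add. lra.
Qed.

Lemma pow_le_one : forall r n, 0 <= r <= 1 -> r ^ n <= 1.
Proof. intros r n H; induction n; simpl. lra. assert (0 <= r ^ n) by (apply pow_le; lra). nra. Qed.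

Lemma pow_anti : forall r m n, 0 <= r <= 1 -> (m <= n)%nat -> r ^ n <= r ^ m.
Proof.
  intros r m n H Hmn. replace n with (m + (n - m))%nat by lia. rewrite pow_add.
  assert (0 <= r ^ m) by (apply pow_le; lra). pose proof (pow_le_one r (n - m) H).
  assert (0 <= r ^ (n-m)) by (apply pow_le; lra). nra.
Qed.

Lemma exp_le : forall x y, x <= y -> exp x <= exp y.
Proof. intros x y [H|H]. left; apply exp_increasing; auto. subst; lra. Qed.

Lemma exp_le_1mx : forall x r, 0 <= x -> x <= r -> r < 1 -> exp (- (x / (1 - r))) <= 1 - x.
Proof.
  intros x r H0 H1 H2.
  pose proof (exp_ineq1_le (x / (1 - r))) as He.
  rewrite exp_Ropp.
  assert (0 <= x / (1 - r)) by (unfold Rdiv; apply Rmult_le_pos; [lra| left; apply Rinv_0_lt_compat; lra]).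
  assert (x / (1 - r) * (1 - r) = x) by (field; lra).
  assert (Hp : 0 < exp (x / (1 - r))) by apply exp_pos.
  apply Rmult_le_reg_r with (exp (x / (1 - r))); auto.
  rewrite Rinv_l by lra.
  apply Rle_trans with ((1 - x) * (1 + x / (1 - r))).
  - set (y := x / (1 - r)) in *. nra.
  - apply Rmult_le_compat_l; lra.
Qed.

Lemma qpoch_lb : forall q n, Cnorm q < 1 ->
  exp (- (/ (1 - Cnorm q) * / (1 - Cnorm q) * (Cnorm q - Cnorm q ^ S n))) <= Cnorm (qpoch q n).
Proof.
  intros q n hq. set (r := Cnorm q) in *. assert (0 <= r) by apply Cnorm_nonneg.
  set (t := / (1 - r)).
  assert (Ht : t * (1 - r) = 1) by (unfold t; field; lra).
  assert (0 < t) by (unfold t; apply Rinv_0_lt_compat; lra).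
  induction n.
  - simpl. rewrite Cnorm_C1. replace (r - r * 1) with 0 by ring.
    rewrite Rmult_0_r, Ropp_0, exp_0; lra.
  - simpl qpoch. rewrite Cnorm_mul.
    assert (Hs : 1 - r ^ S n <= Cnorm (Csub C1 (Cpow q (S n)))).
    { pose proof (Cnorm_sub_ge C1 (Cpow q (S n))). rewrite Cnorm_C1, Cnorm_pow in H1. fold r in H1. lra. }
    assert (Hrn : 0 <= r ^ S n <= r).
    { split. apply pow_le; auto. replace r with (r ^ 1) at 2 by ring. apply pow_anti; lia || lra. }
    pose proof (exp_le_1mx (r ^ S n) r (proj1 Hrn) (proj2 Hrn) hq) as He.
    assert (Eq : - (t * t * (r - r ^ S (S n))) = - (t * t * (r - r ^ S n)) + - (r ^ S n / (1 - r))).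
    { change (r ^ S (S n)) with (r * r ^ S n). unfold Rdiv. fold t.
      replace (r ^ S n * t) with (t * (1 - r) * (t * r ^ S n)) by (rewrite Ht; ring). ring. }
    rewrite Eq, exp_plus.
    apply Rmult_le_compat; try (left; apply exp_pos). all: try lra. change (Cmul (Cpow q n) q) with (Cpow q (S n)). lra.
Qed.

Definition cst (q : Cplx) : R := exp (- (/ (1 - Cnorm q) * / (1 - Cnorm q))).

Lemma cst_pos : forall q, 0 < cst q.
Proof. intros; apply exp_pos. Qed.

Lemma qpoch_lb2 : forall q n, Cnorm q < 1 -> cst q <= Cnorm (qpoch q n).
Proof.
  intros q n hq. eapply Rle_trans; [|apply qpoch_lb; auto]. unfold cst. apply exp_le.
  set (r := Cnorm q). assert (0 <= r) by apply Cnorm_nonneg.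
  assert (0 < / (1 - r)) by (apply Rinv_0_lt_compat; unfold r; lra).
  assert (0 <= r ^ S n) by (apply pow_le; lra).
  assert (r <= 1) by (unfold r; lra).
  assert (0 <= / (1 - r) * / (1 - r)) by nra.
  apply Ropp_le_contravar. rewrite <- (Rmult_1_r (/ (1 - r) * / (1 - r))) at 2.
  apply Rmult_le_compat_l; lra.
Qed.

Lemma qpoch_nz : forall q n, Cnorm q < 1 -> qpoch q n <> C0.
Proof.
  intros q n hq E. pose proof (qpoch_lb2 q n hq). rewrite E, Cnorm_C0 in H.
  pose proof (cst_pos q); lra.
Qed.

Lemma invqpoch_bound : forall q z, Cnorm q < 1 -> Cnorm (invqpoch q z) <= / cst q.
Proof.
  intros q z hq. pose proof (cst_pos q). unfold invqpoch. destruct (z <? 0)%Z.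
  - rewrite Cnorm_C0. left; apply Rinv_0_lt_compat; auto.
  - rewrite Cnorm_inv by (apply qpoch_nz; auto). apply Rinv_le_contravar; auto.
    apply qpoch_lb2; auto.
Qed.


Lemma Csum_ext : forall f g n, (forall k, (k <= n)%nat -> f k = g k) -> Csum f n = Csum g n.
Proof.
  intros f g n H; induction n; simpl. apply H; lia.
  rewrite IHn by (intros; apply H; lia). rewrite (H (S n)) by lia. reflexivity.
Qed.

Lemma Csum_scal : forall c f n, Csum (fun k => Cmul c (f k)) n = Cmul c (Csum f n).
Proof. intros c f n; induction n; simpl. reflexivity. rewrite IHn; ring. Qed.

Lemma Csum_add : forall f g n, Csum (fun k => Cadd (f k) (g k)) n = Cadd (Csum f n) (Csum g n).
Proof. intros f g n; induction n; simpl. reflexivity. rewrite IHn; ring. Qed.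

Lemma Csum_sub : forall f g n, Csum (fun k => Csub (f k) (g k)) n = Csub (Csum f n) (Csum g n).
Proof. intros f g n; induction n; simpl. reflexivity. rewrite IHn; ring. Qed.

Lemma Csum_shift : forall f n, Csum f (S n) = Cadd (f O) (Csum (fun s => f (S s)) n).
Proof.
  intros f n; induction n. simpl. reflexivity.
  change (Csum f (S (S n))) with (Cadd (Csum f (S n)) (f (S (S n)))).
  rewrite IHn. simpl. ring.
Qed.

Lemma Csum_zeros_front : forall m n f, (forall k, (k < m)%nat -> f k = C0) ->
  Csum f (m + n) = Csum (fun r => f (m + r)%nat) n.
Proof.
  induction m; intros n f H. simpl. reflexivity.
  change (S m + n)%nat with (S (m + n)). rewrite Csum_shift. rewrite H by lia.
  rewrite (IHm n (fun s => f (S s))) by (intros; apply H; lia). simpl. ring.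
Qed.

Lemma Csum_zeros_tail : forall L M f, (forall k, (L < k)%nat -> f k = C0) -> (L <= M)%nat ->
  Csum f M = Csum f L.
Proof.
  intros L M f H HM. induction M. replace L with O by lia. reflexivity.
  destruct (Nat.eq_dec L (S M)). subst; reflexivity.
  simpl. rewrite IHM by lia. rewrite H by lia. ring.
Qed.

Lemma P_neg : forall q z, (z < 0)%Z -> invqpoch q z = C0.
Proof. intros q z H. unfold invqpoch. replace (z <? 0)%Z with true; auto. symmetry; apply Z.ltb_lt; auto. Qed.

Lemma P_nat : forall q n, invqpoch q (Z.of_nat n) = Cinv (qpoch q n).
Proof.
  intros q n. unfold invqpoch. replace (Z.of_nat n <? 0)%Z with false by (symmetry; apply Z.ltb_ge; lia).
  rewrite Nat2Z.id; reflexivity.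
Qed.

Lemma pow_ne1 : forall q n, Cnorm q < 1 -> Csub C1 (Cpow q (S n)) <> C0.
Proof.
  intros q n hq E. assert (Cpow q (S n) = C1).
  { replace (Cpow q (S n)) with (Csub C1 (Csub C1 (Cpow q (S n)))) by ring. rewrite E. ring. }
  apply (f_equal Cnorm) in H. rewrite Cnorm_pow, Cnorm_C1 in H.
  pose proof (pow_lt_1_compat (Cnorm q) (S n) (conj (Cnorm_nonneg q) hq)). assert (0 < S n)%nat by lia. specialize (H0 H1). lra.
Qed.

Lemma R1 : forall q x, Cnorm q < 1 ->
  Cmul (invqpoch q (Z.of_nat x)) (Csub C1 (Cpow q x)) = invqpoch q (Z.of_nat x - 1).
Proof.
  intros q x hq. destruct x.
  - rewrite (P_neg q (Z.of_nat 0 - 1)) by lia. simpl. ring.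
  - replace (Z.of_nat (S x) - 1)%Z with (Z.of_nat x) by lia. rewrite !P_nat.
    simpl qpoch. change (Cmul (Cpow q x) q) with (Cpow q (S x)).
    pose proof (qpoch_nz q x hq). pose proof (pow_ne1 q x hq).
    field. split; auto.
Qed.

Lemma Pascal : forall q x y, Cnorm q < 1 ->
  Cmul (Cmul (invqpoch q (Z.of_nat x)) (invqpoch q (Z.of_nat y))) (Csub C1 (Cpow q (x + y))) =
  Cadd (Cmul (Cpow q y) (Cmul (invqpoch q (Z.of_nat x - 1)) (invqpoch q (Z.of_nat y))))
       (Cmul (invqpoch q (Z.of_nat x)) (invqpoch q (Z.of_nat y - 1))).
Proof.
  intros q x y hq. rewrite <- (R1 q x hq), <- (R1 q y hq), Cpow_add. ring.
Qed.

Definition gt (q : Cplx) (L a r : nat) : Cplx :=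
  Cmul (Cpow q (r*r + a*r)) (Cmul (invqpoch q (Z.of_nat r))
    (Cmul (invqpoch q (Z.of_nat L - Z.of_nat r)) (invqpoch q (Z.of_nat (a + r))))).

Lemma P0 : forall q, invqpoch q 0 = C1.
Proof. intros q. change 0%Z with (Z.of_nat 0). rewrite P_nat. simpl. field. apply C1_neq_C0. Qed.

Lemma Cmul_cancel : forall c x y, c <> C0 -> Cmul c x = Cmul c y -> x = y.
Proof.
  intros c x y Hc H. replace x with (Cmul (Cinv c) (Cmul c x)) by (field; auto).
  rewrite H. field; auto.
Qed.

Lemma fid : forall q L a, Cnorm q < 1 ->
  Csum (gt q L a) L = Cmul (invqpoch q (Z.of_nat L)) (invqpoch q (Z.of_nat (L + a))).
Proof.
  intros q L. induction L; intros a hq.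
  - simpl. unfold gt. replace (Z.of_nat 0 - Z.of_nat 0)%Z with (Z.of_nat 0) by lia.
    replace (a + 0)%nat with a by lia. simpl. rewrite P0. replace (a * 0)%nat with O by lia. simpl. ring.
  - set (c := Csub C1 (Cpow q (S L))).
    apply (Cmul_cancel c); [apply pow_ne1; auto|].
    rewrite <- Csum_scal.
    set (A := fun r => Cmul (Cpow q (r*r + a*r)) (Cmul (Cpow q (S L - r))
          (Cmul (invqpoch q (Z.of_nat r - 1)) (Cmul (invqpoch q (Z.of_nat (S L - r))) (invqpoch q (Z.of_nat (a + r))))))).
    rewrite (Csum_ext _ (fun r => Cadd (A r) (gt q L a r))).
    2:{ intros r Hr. unfold gt, A, c.
        pose proof (Pascal q r (S L - r) hq) as HP.
        replace (r + (S L - r))%nat with (S L) in HP by lia.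
        replace (Z.of_nat (S L) - Z.of_nat r)%Z with (Z.of_nat (S L - r)) by lia.
        replace (Z.of_nat L - Z.of_nat r)%Z with (Z.of_nat (S L - r) - 1)%Z by lia.
        transitivity (Cmul (Cpow q (r * r + a * r)) (Cmul
           (Cmul (Cmul (invqpoch q (Z.of_nat r)) (invqpoch q (Z.of_nat (S L - r))))
              (Csub C1 (Cpow q (S L)))) (invqpoch q (Z.of_nat (a + r))))).
        ring. rewrite HP. ring. }
    rewrite Csum_add. simpl Csum at 2.
    rewrite IHL by auto.
    assert (E1 : gt q L a (S L) = C0).
    { unfold gt. rewrite (P_neg q (Z.of_nat L - Z.of_nat (S L))) by lia. ring. }
    rewrite E1.
    rewrite Csum_shift.
    assert (E2 : A O = C0).
    { unfold A. rewrite (P_neg q (Z.of_nat 0 - 1)) by lia. ring. }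
    rewrite E2.
    rewrite (Csum_ext _ (fun s => Cmul (Cpow q (S L + a)) (gt q L (S a) s))).
    2:{ intros s Hs. unfold A, gt.
        replace (Z.of_nat (S s) - 1)%Z with (Z.of_nat s) by lia.
        replace (Z.of_nat (S L - S s)) with (Z.of_nat L - Z.of_nat s)%Z by lia.
        replace (a + S s)%nat with (S a + s)%nat by lia.
        transitivity (Cmul (Cpow q ((S s * S s + a * S s) + (S L - S s)))
          (Cmul (invqpoch q (Z.of_nat s)) (Cmul (invqpoch q (Z.of_nat L - Z.of_nat s))
             (invqpoch q (Z.of_nat (S a + s)))))).
        rewrite (Cpow_add q (S s * S s + a * S s) (S L - S s)); ring.
        replace ((S s * S s + a * S s) + (S L - S s))%nat with ((S L + a) + (s * s + S a * s))%nat by nia.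
        rewrite (Cpow_add q (S L + a) (s * s + S a * s)); ring. }
    rewrite Csum_scal, IHL by auto.
    pose proof (R1 q (S L) hq) as H1. replace (Z.of_nat (S L) - 1)%Z with (Z.of_nat L) in H1 by lia.
    pose proof (R1 q (S L + a) hq) as H2. replace (Z.of_nat (S L + a) - 1)%Z with (Z.of_nat (L + a)) in H2 by lia.
    replace (Z.of_nat (L + S a)) with (Z.of_nat (S L + a)) by lia.
    rewrite <- H1, <- H2. fold c. ring.
Qed.

Lemma inner_id_le : forall q i j M, Cnorm q < 1 -> (j <= i)%nat -> (i + j <= M)%nat ->
  Csum (fun k => lhs_term q i j k) M = rhs_term q i j.
Proof.
  intros q i j M hq Hji HM.
  set (m := (i - j)%nat). set (L := (2 * j)%nat). set (a := (2 * m)%nat).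
  rewrite (Csum_zeros_tail (m + L) M).
  2:{ intros k Hk. unfold lhs_term. rewrite (P_neg q (Z.of_nat i + Z.of_nat j - Z.of_nat k)) by lia. ring. }
  2:{ lia. }
  rewrite Csum_zeros_front.
  2:{ intros k Hk. unfold lhs_term. rewrite (P_neg q (Z.of_nat j + Z.of_nat k - Z.of_nat i)) by lia. ring. }
  rewrite (Csum_ext _ (fun r => Cmul (Cpow q (i*i + j*j + m*m)) (gt q L a r))).
  2:{ intros r Hr. unfold lhs_term, gt.
      replace (Z.of_nat i + Z.of_nat j - Z.of_nat (m + r))%Z with (Z.of_nat L - Z.of_nat r)%Z by lia.
      replace (Z.of_nat i + Z.of_nat (m + r) - Z.of_nat j)%Z with (Z.of_nat (a + r)) by lia.
      replace (Z.of_nat j + Z.of_nat (m + r) - Z.of_nat i)%Z with (Z.of_nat r) by lia.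
      replace (i * i + j * j + (m + r) * (m + r))%nat with ((i*i + j*j + m*m) + (r * r + a * r))%nat by (unfold a; nia).
      rewrite Cpow_add. ring. }
  rewrite Csum_scal, fid by auto.
  unfold rhs_term.
  replace (Z.of_nat i - Z.of_nat j)%Z with (Z.of_nat m) by lia. rewrite Zabs2Nat.id.
  replace (m ^ 2)%nat with (m * m)%nat by (simpl; lia).
  replace (Z.of_nat (L + a)) with (Z.of_nat (2 * i)) by lia.
  unfold L; ring.
Qed.

Lemma lhs_sym : forall q i j k, lhs_term q i j k = lhs_term q j i k.
Proof.
  intros. unfold lhs_term.
  replace (Z.of_nat i + Z.of_nat j - Z.of_nat k)%Z with (Z.of_nat j + Z.of_nat i - Z.of_nat k)%Z by lia.
  replace (i * i + j * j + k * k)%nat with (j * j + i * i + k * k)%nat by lia. ring.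
Qed.

Lemma rhs_sym : forall q i j, rhs_term q i j = rhs_term q j i.
Proof.
  intros. unfold rhs_term.
  replace (Z.abs_nat (Z.of_nat i - Z.of_nat j)) with (Z.abs_nat (Z.of_nat j - Z.of_nat i)) by lia.
  replace (i * i + j * j)%nat with (j * j + i * i)%nat by lia. ring.
Qed.

Lemma inner_id : forall q i j M, Cnorm q < 1 -> (i + j <= M)%nat ->
  Csum (fun k => lhs_term q i j k) M = rhs_term q i j.
Proof.
  intros q i j M hq HM. destruct (Nat.le_ge_cases j i).
  - apply inner_id_le; auto.
  - rewrite rhs_sym, (Csum_ext _ (fun k => lhs_term q j i k)) by (intros; apply lhs_sym).
    apply inner_id_le; auto; lia.
Qed.

Lemma geo_sum : forall r A f N, 0 <= r < 1 -> 0 <= A ->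
  (forall k, (k <= N)%nat -> f k <= A * r ^ k) -> sum_f_R0 f N <= A * / (1 - r).
Proof.
  intros r A f N Hr HA H.
  set (t := / (1 - r)). assert (Ht : t * (1 - r) = 1) by (unfold t; field; lra).
  assert (Htp : 0 < t) by (unfold t; apply Rinv_0_lt_compat; lra).
  assert (H0 : forall n, (n <= N)%nat -> sum_f_R0 f n <= A * t * (1 - r ^ S n)).
  { induction n; intros Hn; simpl.
    - specialize (H O Hn). simpl in H. replace (A * t * (1 - r * 1)) with (A * (t * (1 - r))) by ring.
      rewrite Ht. lra.
    - specialize (IHn ltac:(lia)). specialize (H (S n) Hn). simpl in IHn, H.
      replace (A * t * (1 - r * (r * r ^ n))) with (A * t * (1 - r * r ^ n) + A * (t * (1 - r)) * (r * r ^ n)) by ring.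
      rewrite Ht. lra. }
  specialize (H0 N (le_n N)). assert (0 <= r ^ S N) by (apply pow_le; lra).
  assert (0 <= A * t) by nra. nra.
Qed.

Lemma tail_bound : forall r A f N M, 0 <= r < 1 -> 0 <= A ->
  (forall k, Cnorm (f k) <= A * r ^ k) -> (N <= M)%nat ->
  Cnorm (Csub (Csum f M) (Csum f N)) <= A * / (1 - r) * r ^ S N.
Proof.
  intros r A f N M Hr HA H HNM.
  set (t := / (1 - r)). assert (Ht : t * (1 - r) = 1) by (unfold t; field; lra).
  assert (Htp : 0 < t) by (unfold t; apply Rinv_0_lt_compat; lra).
  assert (H0 : forall d, Cnorm (Csub (Csum f (N + d)) (Csum f N)) <= A * t * (r ^ S N - r ^ S (N + d))).
  { induction d.
    - rewrite Nat.add_0_r. replace (Csub (Csum f N) (Csum f N)) with C0 by ring.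
      rewrite Cnorm_C0. lra.
    - rewrite Nat.add_succ_r. simpl Csum.
      replace (Csub (Cadd (Csum f (N + d)) (f (S (N + d)))) (Csum f N))
        with (Cadd (Csub (Csum f (N + d)) (Csum f N)) (f (S (N + d)))) by ring.
      eapply Rle_trans. apply Cnorm_add.
      specialize (H (S (N + d))).
      replace (A * t * (r ^ S N - r ^ S (S (N + d)))) with
        (A * t * (r ^ S N - r ^ S (N + d)) + A * (t * (1 - r)) * r ^ S (N + d)) by (simpl; ring).
      rewrite Ht. lra. }
  replace M with (N + (M - N))%nat by lia. eapply Rle_trans. apply H0.
  assert (0 <= r ^ S (N + (M - N))) by (apply pow_le; lra). assert (0 <= A * t) by nra. nra.
Qed.

Lemma Re_sub : forall z w, Re (Csub z w) = Re z - Re w.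
Proof. intros; unfold Csub, Cadd, Copp; simpl; ring. Qed.
Lemma Im_sub : forall z w, Im (Csub z w) = Im z - Im w.
Proof. intros; unfold Csub, Cadd, Copp; simpl; ring. Qed.

Lemma small_pow : forall r B eps, 0 <= r < 1 -> 0 <= B -> 0 < eps ->
  exists N, forall n, (n >= N)%nat -> B * r ^ n < eps.
Proof.
  intros r B eps Hr HB He.
  assert (Hr' : Rabs r < 1) by (rewrite Rabs_right; lra).
  destruct (pow_lt_1_zero r Hr' (eps / (B + 1))) as [N HN].
  { apply Rdiv_pos_pos; lra. }
  exists N; intros n Hn. specialize (HN n Hn). rewrite Rabs_right in HN by (apply Rle_ge, pow_le; lra).
  assert (0 <= r ^ n) by (apply pow_le; lra).
  apply Rle_lt_trans with ((B + 1) * r ^ n). nra.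
  replace eps with ((B + 1) * (eps / (B + 1))) by (field; lra).
  apply Rmult_lt_compat_l; lra.
Qed.

Lemma Ccauchy : forall (u : nat -> Cplx) r B, 0 <= r < 1 -> 0 <= B ->
  (forall N n, (N <= n)%nat -> Cnorm (Csub (u n) (u N)) <= B * r ^ S N) ->
  exists L, Ccv u L.
Proof.
  intros u r B Hr HB H.
  assert (HC : forall eps, 0 < eps -> exists N, forall n m, (n >= N)%nat -> (m >= N)%nat ->
     Cnorm (Csub (u n) (u m)) < eps).
  { intros eps He. destruct (small_pow r (2 * B) eps Hr ltac:(lra) He) as [N HN].
    exists N. intros n m Hn Hm.
    replace (Csub (u n) (u m)) with (Csub (Csub (u n) (u N)) (Csub (u m) (u N))) by ring.
    eapply Rle_lt_trans. apply Cnorm_sub.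
    pose proof (H N n Hn). pose proof (H N m Hm). specialize (HN (S N) ltac:(lia)). lra. }
  assert (CR : Cauchy_crit (fun n => Re (u n))).
  { intros eps He. destruct (HC eps He) as [N HN]. exists N. intros n m Hn Hm.
    unfold R_dist. rewrite <- Re_sub. eapply Rle_lt_trans. apply Cnorm_Re. auto. }
  assert (CI : Cauchy_crit (fun n => Im (u n))).
  { intros eps He. destruct (HC eps He) as [N HN]. exists N. intros n m Hn Hm.
    unfold R_dist. rewrite <- Im_sub. eapply Rle_lt_trans. apply Cnorm_Im. auto. }
  destruct (R_complete _ CR) as [lr Hr1]. destruct (R_complete _ CI) as [li Hi1].
  exists (mkC lr li). intros eps He.
  destruct (Hr1 (eps / 2) ltac:(lra)) as [N1 HN1]. destruct (Hi1 (eps / 2) ltac:(lra)) as [N2 HN2].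
  exists (max N1 N2). intros n Hn.
  eapply Rle_lt_trans. apply Cnorm_le_ReIm. rewrite Re_sub, Im_sub. simpl.
  specialize (HN1 n ltac:(lia)). specialize (HN2 n ltac:(lia)). unfold R_dist in *. lra.
Qed.

Lemma Ccv_transfer : forall (u v : nat -> Cplx) L r B, 0 <= r < 1 -> 0 <= B ->
  Ccv v L -> (forall n, Cnorm (Csub (u n) (v n)) <= B * r ^ S n) -> Ccv u L.
Proof.
  intros u v L r B Hr HB Hv H eps He.
  destruct (Hv (eps / 2) ltac:(lra)) as [N1 HN1].
  destruct (small_pow r B (eps / 2) Hr HB ltac:(lra)) as [N2 HN2].
  exists (max N1 N2). intros n Hn.
  replace (Csub (u n) L) with (Cadd (Csub (u n) (v n)) (Csub (v n) L)) by ring.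
  eapply Rle_lt_trans. apply Cnorm_add.
  specialize (HN1 n ltac:(lia)). specialize (HN2 (S n) ltac:(lia)). specialize (H n). lra.
Qed.

Lemma lhs_bound : forall q i j k, Cnorm q < 1 ->
  Cnorm (lhs_term q i j k) <= (/ cst q * / cst q * / cst q) * Cnorm q ^ (i + j + k).
Proof.
  intros q i j k hq. unfold lhs_term. rewrite !Cnorm_mul, Cnorm_pow.
  set (K := / cst q). assert (0 < K) by (apply Rinv_0_lt_compat, cst_pos).
  pose proof (invqpoch_bound q (Z.of_nat i + Z.of_nat j - Z.of_nat k) hq).
  pose proof (invqpoch_bound q (Z.of_nat i + Z.of_nat k - Z.of_nat j) hq).
  pose proof (invqpoch_bound q (Z.of_nat j + Z.of_nat k - Z.of_nat i) hq).
  fold K in H0, H1, H2.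
  pose proof (Cnorm_nonneg (invqpoch q (Z.of_nat i + Z.of_nat j - Z.of_nat k))).
  pose proof (Cnorm_nonneg (invqpoch q (Z.of_nat i + Z.of_nat k - Z.of_nat j))).
  pose proof (Cnorm_nonneg (invqpoch q (Z.of_nat j + Z.of_nat k - Z.of_nat i))).
  assert (0 <= Cnorm q) by apply Cnorm_nonneg.
  assert (Hp : Cnorm q ^ (i * i + j * j + k * k) <= Cnorm q ^ (i + j + k)) by (apply pow_anti; [lra| assert (i <= i*i)%nat by nia; assert (j <= j*j)%nat by nia; assert (k <= k*k)%nat by nia; lia]).
  assert (0 <= Cnorm q ^ (i * i + j * j + k * k)) by (apply pow_le; lra).
  set (a := Cnorm (invqpoch q (Z.of_nat i + Z.of_nat j - Z.of_nat k))) in *.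
  set (b := Cnorm (invqpoch q (Z.of_nat i + Z.of_nat k - Z.of_nat j))) in *.
  set (c := Cnorm (invqpoch q (Z.of_nat j + Z.of_nat k - Z.of_nat i))) in *.
  assert (b * c <= K * K) by nra. assert (a * (b * c) <= K * K * K) by nra.
  assert (0 <= b * c) by nra. assert (0 <= a * (b * c)) by nra.
  rewrite Rmult_comm. apply Rmult_le_compat; auto.
Qed.

Lemma rhs_bound : forall q i j, Cnorm q < 1 ->
  Cnorm (rhs_term q i j) <= (/ cst q * / cst q) * Cnorm q ^ (i + j).
Proof.
  intros q i j hq. unfold rhs_term. rewrite !Cnorm_mul, Cnorm_pow.
  set (K := / cst q). assert (0 < K) by (apply Rinv_0_lt_compat, cst_pos).
  pose proof (invqpoch_bound q (Z.of_nat (2 * i)) hq).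
  pose proof (invqpoch_bound q (Z.of_nat (2 * j)) hq). fold K in H0, H1.
  pose proof (Cnorm_nonneg (invqpoch q (Z.of_nat (2 * i)))).
  pose proof (Cnorm_nonneg (invqpoch q (Z.of_nat (2 * j)))).
  assert (0 <= Cnorm q) by apply Cnorm_nonneg.
  assert (Hp : Cnorm q ^ (i * i + j * j + Z.abs_nat (Z.of_nat i - Z.of_nat j) ^ 2) <= Cnorm q ^ (i + j))
    by (apply pow_anti; [lra| assert (i <= i*i)%nat by nia; assert (j <= j*j)%nat by nia; lia]).
  assert (0 <= Cnorm q ^ (i * i + j * j + Z.abs_nat (Z.of_nat i - Z.of_nat j) ^ 2)) by (apply pow_le; lra).
  rewrite Rmult_comm. apply Rmult_le_compat; auto. nra. nra.
Qed.

Lemma Cnorm_sub_comm : forall a b, Cnorm (Csub a b) = Cnorm (Csub b a).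
Proof. intros. replace (Csub a b) with (Copp (Csub b a)) by ring. apply Cnorm_opp. Qed.

Theorem mainTheorem16 (q : Cplx) (hq : Cnorm q < 1) :
  (exists B : R, forall N : nat, lhs_abs_partial q N <= B) /\
  (exists B : R, forall N : nat, rhs_abs_partial q N <= B) /\
  (exists L : Cplx, Ccv (lhs_partial q) L /\ Ccv (rhs_partial q) L).
Proof.
  set (r := Cnorm q). assert (Hr : 0 <= r < 1) by (split; [apply Cnorm_nonneg| exact hq]).
  set (K := / cst q). assert (HK : 0 < K) by (apply Rinv_0_lt_compat, cst_pos).
  set (t := / (1 - r)). assert (Ht : 0 < t) by (apply Rinv_0_lt_compat; lra).
  assert (Hpow : forall n, 0 <= r ^ n) by (intros; apply pow_le; lra).
  split; [|split].
  - exists (K * K * K * t * t * t). intros N. unfold lhs_abs_partial.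
    replace (K * K * K * t * t * t) with ((K * K * K * t * t) * t) by ring.
    apply geo_sum; auto. assert (0 < K*K*K*t*t) by (repeat apply Rmult_lt_0_compat; auto). lra.
    intros i Hi. replace ((K * K * K * t * t) * r ^ i) with ((K * K * K * t * r ^ i) * t) by ring.
    apply geo_sum; auto. pose proof (Hpow i). assert (0 < K*K*K*t) by (repeat apply Rmult_lt_0_compat; auto). nra.
    intros j Hj. replace ((K * K * K * t * r ^ i) * r ^ j) with ((K * K * K * r ^ (i + j)) * t) by (rewrite pow_add; ring).
    apply geo_sum; auto. pose proof (Hpow (i+j)%nat). assert (0 < K*K*K) by (repeat apply Rmult_lt_0_compat; auto). nra.
    intros k Hk. replace (K * K * K * r ^ (i + j) * r ^ k) with (K * K * K * r ^ (i + j + k)) by (rewrite (pow_add r (i+j)); ring). apply lhs_bound; auto.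
  - exists (K * K * t * t). intros N. unfold rhs_abs_partial.
    apply geo_sum; auto. assert (0 < K*K*t) by (repeat apply Rmult_lt_0_compat; auto). lra.
    intros i Hi. replace ((K * K * t) * r ^ i) with ((K * K * r ^ i) * t) by ring.
    apply geo_sum; auto. pose proof (Hpow i). assert (0 < K*K) by (repeat apply Rmult_lt_0_compat; auto). nra.
    intros j Hj. replace (K * K * r ^ i * r ^ j) with (K * K * r ^ (i + j)) by (rewrite pow_add; ring). apply rhs_bound; auto.
  - assert (HG : forall X i, Cnorm (Csum (fun j => rhs_term q i j) X) <= (K * K * t) * r ^ i).
    { intros X i. eapply Rle_trans. apply Cnorm_Csum.
      replace ((K * K * t) * r ^ i) with ((K * K * r ^ i) * t) by ring.
      apply geo_sum; auto. pose proof (Hpow i). assert (0 < K*K) by (repeat apply Rmult_lt_0_compat; auto). nra.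
      intros j Hj. replace (K * K * r ^ i * r ^ j) with (K * K * r ^ (i + j)) by (rewrite pow_add; ring). apply rhs_bound; auto. }
    assert (Hrc : forall N n, (N <= n)%nat ->
      Cnorm (Csub (rhs_partial q n) (rhs_partial q N)) <= (2 * (K * K * t * t)) * r ^ S N).
    { intros N n HNn. unfold rhs_partial.
      set (G := fun X i => Csum (fun j => rhs_term q i j) X).
      change (Csum (fun i => Csum (fun j => rhs_term q i j) n) n) with (Csum (G n) n).
      change (Csum (fun i => Csum (fun j => rhs_term q i j) N) N) with (Csum (G N) N).
      replace (Csub (Csum (G n) n) (Csum (G N) N)) with
        (Cadd (Csum (fun i => Csub (G n i) (G N i)) n) (Csub (Csum (G N) n) (Csum (G N) N)))
        by (rewrite Csum_sub; ring).
      eapply Rle_trans. apply Cnorm_add.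
      assert (H1 : Cnorm (Csum (fun i => Csub (G n i) (G N i)) n) <= K * K * t * t * r ^ S N).
      { eapply Rle_trans. apply Cnorm_Csum.
        replace (K * K * t * t * r ^ S N) with ((K * K * t * r ^ S N) * t) by ring.
        apply geo_sum; auto. pose proof (Hpow (S N)). assert (0 < K*K*t) by (repeat apply Rmult_lt_0_compat; auto). nra.
        intros i Hi. unfold G.
        replace (K * K * t * r ^ S N * r ^ i) with ((K * K * r ^ i) * / (1 - r) * r ^ S N) by (unfold t; ring).
        apply tail_bound; auto. pose proof (Hpow i). assert (0 < K*K) by (repeat apply Rmult_lt_0_compat; auto). nra.
        intros j. replace (K * K * r ^ i * r ^ j) with (K * K * r ^ (i + j)) by (rewrite pow_add; ring). apply rhs_bound; auto. }
      assert (H2 : Cnorm (Csub (Csum (G N) n) (Csum (G N) N)) <= K * K * t * t * r ^ S N).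
      { replace (K * K * t * t * r ^ S N) with ((K * K * t) * / (1 - r) * r ^ S N) by (unfold t; ring).
        apply tail_bound; auto. assert (0 < K*K*t) by (repeat apply Rmult_lt_0_compat; auto). lra.
        intros i; apply HG. }
      lra. }
    assert (HB0 : 0 <= 2 * (K * K * t * t)) by (assert (0 < K*K*t*t) by (repeat apply Rmult_lt_0_compat; auto); lra).
    destruct (Ccauchy (rhs_partial q) r _ Hr HB0 Hrc) as [L HL].
    exists L. split; auto.
    apply (Ccv_transfer _ (rhs_partial q) L r (K * K * K * t * t * t) Hr); auto.
    { assert (0 < K * K * K * t * t * t) by (repeat apply Rmult_lt_0_compat; auto). lra. }
    intros N.
    replace (Csub (lhs_partial q N) (rhs_partial q N)) with
      (Csum (fun i => Csum (fun j => Csub (Csum (fun k => lhs_term q i j k) N) (rhs_term q i j)) N) N).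
    2:{ unfold lhs_partial, rhs_partial. rewrite <- Csum_sub. apply Csum_ext; intros.
        rewrite <- Csum_sub. reflexivity. }
    eapply Rle_trans. apply Cnorm_Csum.
    replace (K * K * K * t * t * t * r ^ S N) with ((K * K * K * t * t * r ^ S N) * t) by ring.
    apply geo_sum; auto. pose proof (Hpow (S N)). assert (0 < K*K*K*t*t) by (repeat apply Rmult_lt_0_compat; auto). nra.
    intros i Hi. eapply Rle_trans. apply Cnorm_Csum.
    replace (K * K * K * t * t * r ^ S N * r ^ i) with ((K * K * K * t * r ^ S N * r ^ i) * t) by ring.
    apply geo_sum; auto. pose proof (Hpow (S N)). pose proof (Hpow i).
    assert (0 < K*K*K*t) by (repeat apply Rmult_lt_0_compat; auto).
    assert (0 <= K*K*K*t * r ^ S N) by nra. nra.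
    intros j Hj. rewrite <- (inner_id q i j (N + N)) by (auto; lia).
    rewrite Cnorm_sub_comm.
    replace (K * K * K * t * r ^ S N * r ^ i * r ^ j) with ((K * K * K * r ^ (i + j)) * / (1 - r) * r ^ S N)
      by (rewrite pow_add; unfold t; ring).
    apply tail_bound; auto. pose proof (Hpow (i + j)%nat). assert (0 < K*K*K) by (repeat apply Rmult_lt_0_compat; auto). nra.
    intros k. replace (K * K * K * r ^ (i + j) * r ^ k) with (K * K * K * r ^ (i + j + k)) by (rewrite (pow_add r (i+j)); ring).
    apply lhs_bound; auto. lia.
Qed.
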